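(* Let $k\le l$ be positive integers with $\gcd(k,l)=1$, let $n\ge 1$ and $m\ge 0$ be integers, and write $m=qn+r$ with integers $q\ge0$, $0\le r<n$. Then there exists $A\in\mathcal D^{k,l}(m,n)$ such that ${\rm tdet}(A)\le nk(q+1)$.
   Context: $\mathcal D^{k,l}(m,n)$ denotes the set of all $nk\times nl$ matrices with nonnegative integer entries all of whose row sums equal $ml$ and all of whose column sums equal $mk$. For an $s\times t$ matrix $A=(a_{ij})$ with $s\le t$, a transversal of $A$ is a set of entries $T=\{a_{1i_1},\dots,a_{si_s}\}$ with $i_1,\dots,i_s\in\{1,\dots,t\}$ pairwise distinct, and $|T|=a_{1i_1}+\cdots+a_{si_s}$; if $s>t$, the transversals of $A$ are those of its transpose. The tropical determinant is ${\rm tdet}(A)=\max_T|T|$ over all transversals $T$ of $A$. *)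

(* Defs.v *)
From mathcomp Require Import all_boot all_order all_algebra.
Unset Printing Implicit Defensive.

Definition inD (k l m n : nat) (A : 'M[nat]_(n * k, n * l)) : Prop :=
  (forall i, \sum_(j < n * l) A i j = m * l) /\
  (forall j, \sum_(i < n * k) A i j = m * k).

(* For s <= t, transversals are injective choices of a column for each row;
   for s > t, transversals of the transpose (injective choices of a row for
   each column). *)
Definition tdet (s t : nat) (A : 'M[nat]_(s, t)) : nat :=
  if s <= t then
    \max_(f : {ffun 'I_s -> 'I_t} | injectiveb f) \sum_(i < s) A i (f i)
  else
    \max_(g : {ffun 'I_t -> 'I_s} | injectiveb g) \sum_(j < t) A (g j) j.
Arguments tdet {s t} A.

(* Main.v *)
Require Import Defs.
From mathcomp Require Import all_boot all_order all_algebra.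
From mathcomp Require Import zify.

Section Aux.
Variables (n r : nat).
Definition gg (x : nat) : nat := (x %% n < r).

Lemma gg_period (Hn : 0 < n) (Hr : r <= n) i :
  \sum_(0 <= j < n) gg (i + j) = r.
Proof.
elim: i => [|i IH].
  rewrite (big_cat_nat (n:=r)) //= (big_nat_cond _ _ 0 r) (big_nat_cond _ _ r n).
  rewrite (eq_bigr (fun _ => 1)); last first.
    move=> j /andP[/andP[_ Hj] _]; rewrite /gg add0n modn_small ?Hj //.
    exact: leq_trans Hj Hr.
  rewrite [X in _ + X]big1; last first.
    move=> j /andP[/andP[Hj Hj'] _]; rewrite /gg add0n modn_small //.
    by rewrite ltnNge Hj.
  by rewrite -big_nat_cond sum_nat_const_nat subn0 muln1 addn0.
rewrite -(prednK Hn) in IH *.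
rewrite big_nat_recr //= -IH big_nat_recl //= addn0 addnC; congr (_ + _).
  by rewrite /gg addSnnS prednK // modnDr.
by apply: eq_bigr => j _; rewrite addSnnS.
Qed.

Lemma gg_block (Hn : 0 < n) (Hr : r <= n) c i :
  \sum_(0 <= j < n * c) gg (i + j) = r * c.
Proof.
elim: c => [|c IH]; first by rewrite !muln0 big_mkord big_ord0.
rewrite mulnS addnC (big_cat_nat (n:=n*c)) ?leq_addr //= IH -{1}[n * c]add0n big_addn.
rewrite addKn.
rewrite (eq_bigr (fun j => gg ((i + n * c) + j))); last first.
  by move=> j _; rewrite addnA addnAC.
by rewrite gg_period // mulnS addnC.
Qed.
End Aux.

Theorem proposition3p1 (k l n m q r : nat) :
  0 < k -> k <= l -> coprime k l -> 1 <= n ->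
  m = q * n + r -> r < n ->
  exists A : 'M[nat]_(n * k, n * l),
    inD k l m n A /\ tdet A <= n * k * (q + 1).
Proof.
move=> Hk Hkl _ Hn Hm Hr.
have Hr' : r <= n by apply: ltnW.
exists (\matrix_(i < n * k, j < n * l) (q + gg n r (i + j))%N)%R.
split; first split.
- move=> i.
  rewrite (eq_bigr (fun j : 'I_(n * l) => q + gg n r (i + j))); last by move=> j _; rewrite mxE.
  rewrite big_split /= sum_nat_const card_ord.
  rewrite -(big_mkord xpredT (fun j => gg n r (i + j))) gg_block // Hm.
  lia.
- move=> j.
  rewrite (eq_bigr (fun i : 'I_(n * k) => q + gg n r (j + i))); last by move=> i _; rewrite mxE (addnC i).
  rewrite big_split /= sum_nat_const card_ord.
  rewrite -(big_mkord xpredT (fun i => gg n r (j + i))) gg_block // Hm.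
  lia.
have Hs : n * k <= n * l by rewrite leq_mul2l Hkl orbT.
rewrite /tdet Hs.
apply/bigmax_leqP => f _.
have H1 : \sum_(i < n * k) (\matrix_(i0 < n * k, j < n * l) (q + gg n r (i0 + j))%N)%R i (f i)
    <= \sum_(i < n * k) (q + 1).
  apply: leq_sum => i _; rewrite mxE leq_add2l; exact: leq_b1.
apply: (leq_trans H1).
by rewrite sum_nat_const card_ord.
Qed.
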